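(* Let $\mathcal X\subseteq\mathbb R^d$ be an input space, $\mathcal Y=\{1,\dots,C\}$ a finite label set, and $S:\mathcal X\times\mathcal Y\to\mathbb R$ a (non-conformity) score function. Let $(X,Y)\sim\mathcal P_{X,Y}$, and let $\epsilon\sim\mathcal P_\epsilon$ be a perturbation supported on $\mathcal E_r=\{\epsilon:\|\epsilon\|_2\le r\}$, independent of $(X,Y)$; write $Z=(X,Y,\epsilon)$ and $\widetilde X=X+\epsilon$. Fix $\alpha\in(0,1)$ and $s\in[0,\alpha]$, and set $\alpha^*_{\mathrm{aPR}}=1-\frac{1-\alpha}{1-\alpha+s}$. For $\tilde\alpha\in[0,1)$ define the robust quantile $$Q^{\mathrm{rob}}(X,Y;\tilde\alpha)=\min\{t:\ \mathbb P_\epsilon\{S(X+\epsilon,Y)\le t\}\ge 1-\tilde\alpha\},$$ and the threshold $$\tau^{\mathrm{aPR}}(\alpha;s)=\min\{t:\ \mathbb P_{X,Y}\{Q^{\mathrm{rob}}(X,Y;\alpha^*_{\mathrm{aPR}})\le t\}\ge 1-\alpha+s\}.$$ Let $\mathcal C^{\mathrm{aPR}}(\widetilde X)=\{y\in\mathcal Y: S(\widetilde X,y)\le \tau^{\mathrm{aPR}}(\alpha;s)\}$. Then $$\mathbb P_{X,Y,\epsilon}\{Y\in \mathcal C^{\mathrm{aPR}}(X+\epsilon)\}\ge 1-\alpha,$$ i.e. $\mathcal C^{\mathrm{aPR}}$ provides $(1-\alpha)$-probabilistically robust coverage.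
   Context: A prediction set map $\mathcal C$ provides $(1-\alpha)$-probabilistically robust coverage if $\mathbb P_{X,Y,\epsilon}\{Y\in\mathcal C(X+\epsilon)\}\ge 1-\alpha$, where the probability is over the joint distribution of $(X,Y)$ and the independent perturbation $\epsilon$. The quantities $Q^{\mathrm{rob}}$ and $\tau^{\mathrm{aPR}}$ are the (population) quantiles defined in the claim, assumed well-defined (finite). *)

(* Defs.v *)
From HB Require Import structures.
From mathcomp Require Import all_boot all_order all_algebra.
From mathcomp Require Import all_classical all_reals all_analysis.
Set Implicit Arguments. Unset Strict Implicit. Unset Printing Implicit Defensive.
Import Order.TTheory GRing.Theory Num.Theory.
Local Open Scope classical_set_scope.
Local Open Scope ring_scope.

(* Euclidean space R^d, represented as d.-tuple R with its library product
   (= Borel) sigma-algebra generated by the coordinate projections. *)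
Definition vadd (R : realType) (d : nat) (x e : d.-tuple R) : d.-tuple R :=
  [tuple tnth x i + tnth e i | i < d].

Definition l2norm (R : realType) (d : nat) (e : d.-tuple R) : R :=
  Num.sqrt (\sum_(i < d) tnth e i ^+ 2).

(* A nonempty finite label set with K.+1 elements, represented as 'I_K.+1,
   with the discrete sigma-algebra.  (The paper's Y = {1,...,C} with C >= 1
   corresponds to K = C - 1.) *)
Definition label (K : nat) : Type := 'I_K.+1.
HB.instance Definition _ K := Choice.on (label K).
HB.instance Definition _ K := isPointed.Build (label K) ord0.
HB.instance Definition _ K := @isMeasurable.Build default_measure_display
  (label K) discrete_measurable discrete_measurable0
  discrete_measurableC discrete_measurableU.

Local Open Scope ereal_scope.

Definition alpha_aPR (R : realType) (alpha s : R) : R :=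
  (1 - (1 - alpha) / (1 - alpha + s))%R.

(* Robust quantile Q^rob(x, y; a) = min { t : P_eps{ S(x + eps, y) <= t } >= 1 - a }
   (written as an infimum; it is a minimum whenever the set is nonempty). *)
Definition Qrob (R : realType) (d K : nat) (Peps : probability (d.-tuple R) R)
    (S : d.-tuple R -> label K -> R) (x : d.-tuple R) (y : label K) (a : R) : R :=
  inf [set t : R | ((1 - a)%:E <= Peps [set e | (S (vadd x e) y <= t)%R])].

Definition tau_aPR (R : realType) (d K : nat)
    (PXY : probability (d.-tuple R * label K)%type R) (Peps : probability (d.-tuple R) R)
    (S : d.-tuple R -> label K -> R) (alpha s : R) : R :=
  inf [set t : R | ((1 - alpha + s)%:E <=
     PXY [set xy | (Qrob Peps S xy.1 xy.2 (alpha_aPR alpha s) <= t)%R])].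

Definition C_aPR (R : realType) (d K : nat)
    (PXY : probability (d.-tuple R * label K)%type R) (Peps : probability (d.-tuple R) R)
    (S : d.-tuple R -> label K -> R) (alpha s : R) (xt : d.-tuple R) : set (label K) :=
  [set y | (S xt y <= tau_aPR PXY Peps S alpha s)%R].

(* Main.v *)
Require Import Defs.
From HB Require Import structures.
From mathcomp Require Import all_boot all_order all_algebra.
From mathcomp Require Import all_classical all_reals all_analysis.
From mathcomp Require Import measurable_realfun lra.
Import Order.TTheory GRing.Theory Num.Theory.
Local Open Scope classical_set_scope.
Local Open Scope ring_scope.

Section aux.
Context d (T : measurableType d) (R : realType) (mu : probability T R).

Lemma lim_ge_cap (F : (set T)^nat) (c : R) :
  (forall n, measurable (F n)) -> nonincreasing_seq F ->
  (forall n, (c%:E <= mu (F n))%E) -> (c%:E <= mu (\bigcap_n F n))%E.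
Proof.
move=> mF niF cF.
have H := nonincreasing_cvg_mu (mu:=mu) (le_lt_trans (probability_le1 mu (mF 0%N)) (ltry 1)) mF
  (bigcap_measurable (ex_intro _ 0%N I) (fun k _ => mF k)) niF.
rewrite -(cvg_lim _ H) //; apply: lime_ge; first by apply/cvg_ex; eexists; exact: H.
by apply: nearW => n; exact: cF.
Qed.

Lemma level_props (g : T -> R) (c : R) :
  (forall t, measurable [set x | (g x <= t)%R]) -> 0 < c ->
  (exists t, (c%:E <= mu [set x | (g x <= t)%R])%E) ->
  let U := [set t | (c%:E <= mu [set x | (g x <= t)%R])%E] in
  has_lbound U /\ U (inf U) /\ (forall t t', U t -> t <= t' -> U t').
Proof.
move=> mg c0 [t0 Ht0] U.
have upU : forall t t', U t -> t <= t' -> U t'.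
  move=> t t' Ut tt'; apply: (le_trans Ut); apply: le_measure; rewrite ?inE //.
  by move=> x /= /le_trans; apply.
have lbU : has_lbound U.
  apply/not_existsP => /= H.
  have cF : forall n : nat, (c%:E <= mu [set x | (g x <= - n%:R)%R])%E.
    move=> n; have /existsNP[u /not_implyP[Uu]] := H (- n%:R).
    by move/negP; rewrite -ltNge => /ltW; exact: upU.
  have := @lim_ge_cap (fun n : nat => [set x | (g x <= - n%:R)%R]) c (fun n => mg _) _ cF.
  have ni : nonincreasing_seq (fun n : nat => [set x | (g x <= - n%:R)%R]).
    by move=> m n mn; apply/subsetPset => x /= /le_trans; apply; rewrite lerN2 ler_nat.
  move=> /(_ ni).
  have -> : \bigcap_n [set x | (g x <= - n%:R)%R] = set0.
    apply/seteqP; split => // x /= Hx.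
    have [n Hn] : exists n : nat, - g x < n%:R.
      exists (Num.truncn (- g x)).+1; exact: truncnS_gt.
    have := Hx n I => /= H2; lra.
  by rewrite measure0 lee_fin leNgt c0.
split => //; split => //.
have hasU : has_inf U by split => //; exists t0.
have cF : forall n : nat, (c%:E <= mu [set x | (g x <= inf U + n.+1%:R^-1)%R])%E.
  move=> n; have e0 : 0 < n.+1%:R^-1 :> R by rewrite invr_gt0 ltr0Sn.
  have [u Uu ult] := inf_adherent e0 hasU.
  exact: (upU _ _ Uu (ltW ult)).
have := @lim_ge_cap (fun n : nat => [set x | (g x <= inf U + n.+1%:R^-1)%R]) c (fun n => mg _) _ cF.
have ni : nonincreasing_seq (fun n : nat => [set x | (g x <= inf U + n.+1%:R^-1)%R]).
  move=> m n mn; apply/subsetPset => x /= /le_trans; apply; rewrite lerD2l lef_pV2 ?ler_nat ?posrE ?ltr0Sn //.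
move=> /(_ ni).
have -> // : \bigcap_n [set x | (g x <= inf U + n.+1%:R^-1)%R] = [set x | (g x <= inf U)%R].
apply/seteqP; split => x /= Hx.
  rewrite leNgt; apply/negP => /ltr_add_invr [k Hk].
  by move: (Hx k I) => /=; rewrite leNgt Hk.
move=> n _; apply: (le_trans Hx); rewrite lerDl invr_ge0 ler0n //.
Qed.
End aux.
Arguments level_props {d T R} mu {g c}.
Arguments lim_ge_cap {d T R} mu {F c}.

Lemma mlev {d} {T : measurableType d} {R : realType} {g : T -> R} :
  measurable_fun setT g -> forall t, measurable [set x | g x <= t].
Proof.
move=> mg t; have := mg measurableT _ (measurable_itv `]-oo, t]).
rewrite setTI; congr measurable; apply/seteqP; split => x /=; by rewrite in_itv.
Qed.

Theorem theorem1 (R : realType) (d K : nat)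
    (PXY : probability (d.-tuple R * label K)%type R)
    (Peps : probability (d.-tuple R) R)
    (S : d.-tuple R -> label K -> R) (r alpha s : R) :
  measurable_fun setT (fun xy : d.-tuple R * label K => S xy.1 xy.2) ->
  0 <= r ->
  Peps [set e | l2norm e <= r] = 1%E ->
  0 < alpha < 1 ->
  0 <= s <= alpha ->
  (forall x y, exists t : R,
     ((1 - alpha_aPR alpha s)%:E <= Peps [set e | (S (vadd x e) y <= t)%R])%E) ->
  (exists t : R, ((1 - alpha + s)%:E <=
     PXY [set xy | (Qrob Peps S xy.1 xy.2 (alpha_aPR alpha s) <= t)%R])%E) ->
  ((1 - alpha)%:E <=
     (PXY \x Peps)%E [set z | C_aPR PXY Peps S alpha s (vadd z.1.1 z.2) z.1.2])%E.
Proof.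
move=> mS _ _ /andP[a0 a1] /andP[s0 sa] hQ htau.
set a := alpha_aPR alpha s.
set c1 := 1 - a; set c2 := 1 - alpha + s.
have c2gt0 : 0 < c2 by rewrite /c2; lra.
have c1E : c1 = (1 - alpha) / c2 by rewrite /c1 /a /alpha_aPR subKr.
have c1gt0 : 0 < c1 by rewrite c1E divr_gt0 // subr_gt0.
have c12 : c1 * c2 = 1 - alpha by rewrite c1E divfK // gt_eqF.
pose f := fun z : (d.-tuple R * label K) * d.-tuple R => S (vadd z.1.1 z.2) z.1.2.
have mf : measurable_fun setT f.
  apply: (@measurableT_comp _ _ _ _ _ _ (fun xy : d.-tuple R * label K => S xy.1 xy.2) _
     (fun z : (d.-tuple R * label K) * d.-tuple R => (vadd z.1.1 z.2, z.1.2))) => //.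
  apply: measurable_fun_pair; last first.
    exact: (measurableT_comp measurable_snd measurable_fst).
  apply/measurable_fun_tnthP => i.
  rewrite (_ : _ \o _ = fun z : (d.-tuple R * label K) * d.-tuple R =>
     tnth z.1.1 i + tnth z.2 i); last first.
    by apply/funext => z /=; rewrite tnth_mktuple.
  apply: measurable_realfun.measurable_funD.
    apply: (measurableT_comp (measurable_tnth i)).
    exact: (measurableT_comp measurable_fst measurable_fst).
  exact: (measurableT_comp (measurable_tnth i) measurable_snd).
have xsecE : forall t xy, xsection [set z | f z <= t] xy =
    [set e | S (vadd xy.1 e) xy.2 <= t].
  move=> t xy; apply/seteqP; split => e /=; by rewrite /xsection /= inE.
have phi : forall t, measurable_fun setT
    (fun xy : d.-tuple R * label K => (Peps [set e | S (vadd xy.1 e) xy.2 <= t] : \bar R)).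
  move=> t; have := measurable_fun_xsection Peps (mlev mf t).
  congr measurable_fun; apply/funext => xy /=; by rewrite xsecE.
have Qeq : forall (xy : d.-tuple R * label K) t,
    Qrob Peps S xy.1 xy.2 a <= t <-> (c1%:E <= Peps [set e | (S (vadd xy.1 e) xy.2 <= t)%R])%E.
  move=> xy t.
  have mg : forall t, measurable [set e | (fun e => f (xy, e)) e <= t].
    by move=> t'; apply: mlev; exact: measurable_fun_pair2.
  have [lb [inU upU]] := level_props Peps mg c1gt0 (hQ xy.1 xy.2).
  split => [Qt|Ut].
    exact: (upU _ _ inU Qt).
  exact: (ge_inf lb Ut).
have Lmeas : forall t, measurable
    [set xy : d.-tuple R * label K | Qrob Peps S xy.1 xy.2 a <= t].
  move=> t; have := phi t measurableT _ (emeasurable_itv `[c1%:E, +oo[).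
  rewrite setTI; congr measurable; apply/seteqP; split => xy /=.
    by rewrite in_itv /= andbT => /Qeq.
  by move/Qeq; rewrite in_itv /= andbT.
have [_ [tauU _]] := level_props PXY Lmeas c2gt0 htau.
set tau := tau_aPR PXY Peps S alpha s.
have tauU2 : (c2%:E <= PXY [set xy | (Qrob Peps S xy.1 xy.2 a <= tau)%R])%E := tauU.
change ((1 - alpha)%:E <= (PXY \x Peps)%E [set z | (f z <= tau)%R])%E.
rewrite /product_measure1 -c12 EFinM.
pose L := [set xy : d.-tuple R * label K | Qrob Peps S xy.1 xy.2 a <= tau].
apply: (@le_trans _ _ (\int[PXY]_(x in setT) (c1 * \1_L x)%:E)%E).
  have neg : c1 < 0 -> (fun _ : R => L) c1 = set0.
    by move=> c1lt0; have := lt_trans c1gt0 c1lt0; rewrite ltxx.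
  rewrite (@integralZl_indic _ _ _ PXY setT measurableT (fun _ => L) c1 neg (Lmeas tau)).
  rewrite /= integral_indic //; last exact: Lmeas.
  rewrite [X in (_ <= _ * PXY X)%E](_ : _ = L); last first.
    by apply/seteqP; split => x //=; case.
  by apply: lee_wpmul2l => //; rewrite lee_fin ltW.
refine (@ge0_le_integral _ _ R PXY setT measurableT (fun x => (c1 * \1_L x)%:E) (Peps \o xsection [set z | (f z <= tau)%R]) _ _ _ _).
- by move=> xy _; rewrite lee_fin mulr_ge0 // ?ltW.
- apply/measurable_EFinP; apply: measurable_realfun.measurable_funM; [exact: measurable_cst | exact: measurable_indic (Lmeas tau)].
- exact: measurable_fun_xsection (mlev mf tau).
move=> xy _ /=; rewrite xsecE /indic.
have [Lxy|nLxy] := boolP (xy \in L).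
  by rewrite mulr1; apply/Qeq; move: Lxy; rewrite inE.
by rewrite mulr0.
Qed.
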